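(* Let $G=(V,E)$ be a finite simple undirected graph, with a (possibly empty) set of boundary vertices $\partial G\subseteq V$, each boundary vertex having degree exactly one. Let $\mathring V=V\setminus\partial G$ and let $\mathring E$ be the set of edges with both endpoints in $\mathring V$. Give each edge $e$ an arbitrary orientation $e=(u,v)$ and a coordinate $x_e\in[0,1]$ with $x_e=0$ at $u$ and $x_e=1$ at $v$; for a vertex $v$ incident to $e$ write $x_{e,v}\in\{0,1\}$ for the value of $x_e$ at $v$. Let $f$ be a real function on the geometric realization (unit-length edges) such that for each edge $e$ there are real constants $C(e),B(e)$ with $f(e,x_e)=C(e)\cos(B(e)+\pi x_e)$ for $x_e\in[0,1]$, such that $f$ vanishes at every vertex (i.e. $f(e,x_{e,v})=0$ for every edge $e$ and endpoint $v$), and such that $f$ is edge-based, i.e. for every vertex $v\in V$ $$\sum_{e\ni v}(-1)^{1-x_{e,v}}\frac{\partial f}{\partial x_e}(e,x_{e,v})=0.$$ Then $f$ vanishes identically on every edge not in $\mathring E$, and for each $e\in\mathring E$ there is a real constant $D(e)$ with $f(e,x_e)=D(e)\cos(\tfrac{\pi}{2}+\pi x_e)$, where $$\sum_{e\ni v,\ e\in\mathring E}D(e)=0\quad\text{for all } v\in\mathring V.$$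
   Context: The factor $(-1)^{1-x_{e,v}}$ turns the derivative along $x_e$ into the outward-pointing derivative at $v$; the edge-based condition says the outward derivatives of $f$ at each vertex sum to zero (the vertex-based Laplacian of $f$ vanishes). Such $f$ are the eigenfunctions of the edge-based Laplacian $\Delta_E f=-f''$ with frequency $\omega=\pi$ (eigenvalue $\pi^2$) that are zero on the vertices. *)

(* Defs.v *)
From HB Require Import structures.
From mathcomp Require Import all_boot all_order all_algebra.
From mathcomp Require Import all_classical all_reals all_analysis.
Set Implicit Arguments. Unset Strict Implicit. Unset Printing Implicit Defensive.
Import Order.TTheory GRing.Theory Num.Theory.
Local Open Scope ring_scope.

(* A graph with vertex type V and edge type E; each edge e is oriented
   e = (src e, tgt e). *)

Definition incident (V E : finType) (src tgt : E -> V) (e : E) (v : V) : bool :=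
  (src e == v) || (tgt e == v).

Definition simple_graph (V E : finType) (src tgt : E -> V) : Prop :=
  (forall e, src e != tgt e) /\
  (forall e1 e2, [set src e1; tgt e1] = [set src e2; tgt e2] -> e1 = e2).

Definition degree (V E : finType) (src tgt : E -> V) (v : V) : nat :=
  #|[set e | incident src tgt e v]|.

Definition xev (V E : finType) (src : E -> V) (e : E) (v : V) : nat :=
  if src e == v then 0%N else 1%N.

Definition interior_edge (V E : finType) (src tgt : E -> V) (bd : {set V})
  (e : E) : bool := (src e \notin bd) && (tgt e \notin bd).

Definition cosfun (R : realType) (C B : R) : R -> R :=
  fun x => C * cos (B + pi * x).

(* Main.v *)
Require Import Defs.
From HB Require Import structures.
From mathcomp Require Import all_boot all_order all_algebra.
From mathcomp Require Import all_classical all_reals all_analysis.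
From mathcomp Require Import ring.
Import Order.TTheory GRing.Theory Num.Theory.
Local Open Scope ring_scope.

Lemma cosfun_derive {R : realType} (C B x : R) :
  is_derive x 1 (cosfun C B) (- (C * (pi * sin (B + pi*x)))).
Proof.
rewrite /cosfun.
have h1 : is_derive x 1 (fun y : R => B + pi * y) pi.
  have := is_deriveD (is_derive_cst B x 1) (is_deriveZ pi (is_derive_id x 1)).
  rewrite add0r /GRing.scale /= mulr1; apply.
have h2 := @is_derive1_comp R cos (fun y => B + pi * y) x _ _ (is_derive_cos (B + pi * x)) h1.
have h3 := is_deriveZ C h2.
have e : - (C * (pi * sin (B + pi * x))) = C * (- sin (B + pi * x) * pi).
  by rewrite mulNr mulrN (mulrC pi).
rewrite e. exact: h3.
Qed.

Lemma cosfun_derive1 {R : realType} (C B x : R) :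
  derive1 (cosfun C B) x = - (C * (pi * sin (B + pi*x))).
Proof. rewrite derive1E; have := cosfun_derive C B x; by case. Qed.

Theorem mainTheorem2 (R : realType) (V E : finType) (src tgt : E -> V)
  (bd : {set V}) (f : E -> R -> R) (C B : E -> R) :
  simple_graph src tgt ->
  (forall v, v \in bd -> degree src tgt v = 1%N) ->
  (forall e x, 0 <= x <= 1 -> f e x = cosfun (C e) (B e) x) ->
  (forall e v, incident src tgt e v -> f e (xev src e v)%:R = 0) ->
  (forall v, \sum_(e | incident src tgt e v)
       (-1) ^+ (1 - xev src e v) *
         derive1 (cosfun (C e) (B e)) (xev src e v)%:R = 0) ->
  (forall e, ~~ interior_edge src tgt bd e ->
       forall x, 0 <= x <= 1 -> f e x = 0) /\
  exists D : E -> R,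
    (forall e, interior_edge src tgt bd e ->
       forall x, 0 <= x <= 1 -> f e x = D e * cos (pi / 2 + pi * x)) /\
    (forall v, v \notin bd ->
       \sum_(e | incident src tgt e v && interior_edge src tgt bd e) D e = 0).
Proof.
move=> [hs _] hdeg hf hvan hder.
pose D e := C e * sin (B e).
have xs e : xev src e (src e) = 0%N by rewrite /xev eqxx.
have xt e : xev src e (tgt e) = 1%N by rewrite /xev (negbTE (hs e)).
have hC e : C e * cos (B e) = 0.
  have := hvan e (src e); rewrite /incident eqxx xs /= => /(_ isT).
  rewrite hf ?lexx ?ler01 // /cosfun mulr0 addr0 => ->. done.
have hform e y : cosfun (C e) (B e) y = D e * cos (pi / 2 + pi * y).
  rewrite /cosfun /D (addrC (pi / 2)) cosDpihalf cosD mulrBr mulrA hC mul0r sub0r.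
  by rewrite mulrN mulrA.
have hterm v e : incident src tgt e v ->
    (-1) ^+ (1 - xev src e v) * derive1 (cosfun (C e) (B e)) (xev src e v)%:R
    = pi * D e.
  rewrite /incident cosfun_derive1 /D; case/orP => /eqP <-.
    by rewrite xs expr1 mulr0 addr0; ring.
  rewrite xt expr0 mul1r mulr1 (sinDpi (B e)).
  ring.
have hsum v : \sum_(e | incident src tgt e v) D e = 0.
  have := hder v; rewrite (eq_bigr _ (hterm v)) -mulr_sumr => /eqP.
  by rewrite mulf_eq0 (negbTE (lt0r_neq0 (pi_gt0 R))) /= => /eqP.
have hD0 e : ~~ interior_edge src tgt bd e -> D e = 0.
  have key v : v \in bd -> incident src tgt e v -> D e = 0.
    move=> vbd inc; have := hdeg v vbd; rewrite /degree => /eqP/cards1P [a ha].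
    have Pe e' : incident src tgt e' v = (e' == a).
      have := congr1 (fun S : {set E} => e' \in S) ha; by rewrite finset.in_set1 finset.in_set.
    have ea : e = a by apply/eqP; rewrite -Pe.
    have := hsum v; rewrite (eq_bigl _ _ Pe) big_pred1_eq -ea; exact.
  rewrite /interior_edge negb_and !negbK; case/orP => hb.
    by apply: (key _ hb); rewrite /incident eqxx.
  by apply: (key _ hb); rewrite /incident eqxx orbT.
split.
  move=> e he x hx; rewrite hf // hform hD0 // mul0r //.
exists D; split.
  by move=> e _ x hx; rewrite hf // hform.
move=> v _; have := hsum v; rewrite (bigID (interior_edge src tgt bd)) /=.
by rewrite [X in _ + X]big1 ?addr0 // => e /andP [_ /hD0].
Qed.
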